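(* Let $D\in\operatorname{Div}(G)$, fix $q\in V(G)$, and define the divisor $D'$ by $[D']=[D]-Q\lfloor L_{(q)}[D]\rfloor$, where $\lfloor\cdot\rfloor$ is the coordinatewise floor. Then $D'\sim D$ and $|D'(v)|<\deg(v)$ for every vertex $v\ne q$.
   Context: $G$ is a finite connected multigraph without loop edges, with vertex set $V(G)=\{v_1,\dots,v_n\}$ and edge set $E(G)$. A divisor is an element $D=\sum_v D(v)(v)$ of the free abelian group $\operatorname{Div}(G)$ on $V(G)$, identified with the integer column vector $[D]$. $Q$ is the Laplacian matrix ($q_{ii}=\deg(v_i)$, and for $i\ne j$, $-q_{ij}$ is the number of edges between $v_i$ and $v_j$). $D_1\sim D_2$ means $[D_1]-[D_2]=Q\mathbf{f}$ for some integer vector $\mathbf{f}$. For $q=v_i$, $Q_i$ is the invertible matrix obtained from $Q$ by deleting the $i$-th row and column, and $L_{(q)}$ is the $n\times n$ matrix obtained from $Q_i^{-1}$ by inserting a zero row and a zero column in position $i$; it satisfies $QL_{(q)}=I+R$, where $R$ has all entries $-1$ in row $i$ and zeros elsewhere. *)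

(* Defs.v *)
From HB Require Import structures.
From mathcomp Require Import all_boot all_order all_algebra.
Set Implicit Arguments. Unset Strict Implicit. Unset Printing Implicit Defensive.
Import Order.TTheory GRing.Theory Num.Theory.
Local Open Scope ring_scope.

(* A finite multigraph on the vertex set 'I_n.+1 (there is at least one
   vertex since q is a vertex) is given by an edge-multiplicity function
   m : 'I_n.+1 -> 'I_n.+1 -> nat (m i j = number of edges between i and j). *)

Definition loopless (n : nat) (m : 'I_n -> 'I_n -> nat) : Prop :=
  forall i, m i i = 0%N.

Definition symmetric_mult (n : nat) (m : 'I_n -> 'I_n -> nat) : Prop :=
  forall i j, m i j = m j i.

Definition adj (n : nat) (m : 'I_n -> 'I_n -> nat) : rel 'I_n :=
  fun i j => (0 < m i j)%N.

Definition connected_mg (n : nat) (m : 'I_n -> 'I_n -> nat) : Prop :=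
  forall i j, connect (adj m) i j.

Definition deg (n : nat) (m : 'I_n -> 'I_n -> nat) (v : 'I_n) : nat :=
  (\sum_(j < n) m v j)%N.

Definition laplacian (n : nat) (m : 'I_n -> 'I_n -> nat) : 'M[int]_n :=
  \matrix_(i, j) (if i == j then (deg m i)%:Z else - (m i j)%:Z).

(* divisors are integer column vectors; linear equivalence *)
Definition lin_equiv (n : nat) (m : 'I_n -> 'I_n -> nat)
  (D1 D2 : 'cV[int]_n) : Prop :=
  exists f : 'cV[int]_n, D1 - D2 = laplacian m *m f.

Definition reduced_laplacian (n : nat) (m : 'I_n.+1 -> 'I_n.+1 -> nat)
  (q : 'I_n.+1) : 'M[rat]_n :=
  map_mx (fun z : int => z%:~R) (row' q (col' q (laplacian m))).

(* L_(q): inverse of Q_q with a zero row and column inserted at q *)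
Definition Lq (n : nat) (m : 'I_n.+1 -> 'I_n.+1 -> nat) (q : 'I_n.+1)
  : 'M[rat]_n.+1 :=
  \matrix_(i, j)
    match unlift q i, unlift q j with
    | Some i', Some j' => invmx (reduced_laplacian m q) i' j'
    | _, _ => 0
    end.

Definition floor_cV (n : nat) (v : 'cV[rat]_n) : 'cV[int]_n :=
  map_mx (fun x : rat => Num.floor x) v.

Definition reduce_div (n : nat) (m : 'I_n.+1 -> 'I_n.+1 -> nat)
  (q : 'I_n.+1) (D : 'cV[int]_n.+1) : 'cV[int]_n.+1 :=
  D - laplacian m *m floor_cV (Lq m q *m map_mx (fun z : int => z%:~R) D).

(* Main.v *)
Require Import Defs.
From HB Require Import structures.
From mathcomp Require Import all_boot all_order all_algebra.
From mathcomp Require Import lra.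
Import Order.TTheory GRing.Theory Num.Theory.
Local Open Scope ring_scope.

Definition Qr (n : nat) (m : 'I_n -> 'I_n -> nat) : 'M[rat]_n :=
  map_mx (fun z : int => z%:~R) (laplacian m).
Arguments Qr {n} m.

Lemma row_Q n (m : 'I_n -> 'I_n -> nat) (Hloop : loopless m) (z : 'I_n -> rat) i :
  \sum_k Qr m i k * z k = \sum_k (m i k)%:R * (z i - z k).
Proof.
rewrite (bigD1 i) //= [RHS](bigD1 i) //= Hloop subrr mulr0 add0r.
rewrite !mxE eqxx /deg (bigD1 i) //= Hloop add0n.
rewrite sumMz mulr_suml -big_split /=; apply: eq_bigr => k Hk.
rewrite !mxE eq_sym (negbTE Hk) mulrBr.
by rewrite intrN mulNr.


Qed.

Lemma maxpr n (m : 'I_n -> 'I_n -> nat) (Hloop : loopless m) (Hconn : connected_mg m)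
  (q : 'I_n) (z : 'I_n -> rat) :
  z q = 0 -> (forall v, v != q -> \sum_k Qr m v k * z k = 0) -> forall v, z v <= 0.
Proof.
move=> zq Hv v; rewrite leNgt; apply/negP => zv.
have [u _ Hmax] := @arg_maxP _ _ _ q xpredT z isT.
have zu : 0 < z u by apply: lt_le_trans zv (Hmax v isT).
have step : forall x y, z x = z u -> adj m x y -> z y = z u.
  move=> x y zx axy.
  have xq : x != q by apply/eqP => exq; move: zu; rewrite -zx exq zq ltxx.
  have := Hv x xq; rewrite row_Q // => H0.
  have hge : forall k, xpredT k -> 0 <= (m x k)%:R * (z x - z k).
    by move=> k _; rewrite mulr_ge0 // subr_ge0 zx; apply: Hmax.
  have := @psumr_eq0P _ _ xpredT (fun k => (m x k)%:R * (z x - z k)) hge H0 y isT.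
  move=> /eqP; rewrite mulf_eq0 pnatr_eq0 subr_eq0.
  rewrite /adj lt0n in axy; rewrite (negbTE axy) /= => /eqP <- //.
have hp : forall p x, path (adj m) x p -> z x = z u -> z (last x p) = z u.
  elim=> [|y p IH] x //= /andP [axy pp] zx.
  by apply: IH => //; apply: step axy.
have /connectP [p pp lq] := Hconn u q.
by move: (hp p u pp erefl); rewrite -lq zq => h; move: zu; rewrite -h ltxx.
Qed.

Lemma lap_sym n (m : 'I_n -> 'I_n -> nat) (Hsym : symmetric_mult m) i j :
  laplacian m i j = laplacian m j i.
Proof.
rewrite !mxE eq_sym; case: eqP => [->|_] //; by rewrite Hsym.
Qed.

Lemma red_unit n (m : 'I_n.+1 -> 'I_n.+1 -> nat) (Hsym : symmetric_mult m)
  (Hloop : loopless m) (Hconn : connected_mg m) q :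
  reduced_laplacian m q \in unitmx.
Proof.
rewrite unitmxE unitfE; apply/negP => /det0P [v vn0 vA].
pose z k := match unlift q k with Some i => v 0 i | None => 0 end.
have zq : z q = 0 by rewrite /z unlift_none.
have zl : forall i, z (lift q i) = v 0 i by move=> i; rewrite /z liftK.
have Hv : forall w, w != q -> \sum_k Qr m w k * z k = 0.
  move=> w; case: (unliftP q w) => [j ->|->]; last by rewrite eqxx.
  move=> _; rewrite (bigD1_ord q) //= zq mulr0 add0r.
  transitivity ((v *m reduced_laplacian m q) 0 j); last by rewrite vA mxE.
  rewrite mxE; apply: eq_bigr => i _; rewrite zl !mxE mulrC eq_sym.
  by case: eqP => [->|_] //; rewrite Hsym.
have Hv' : forall w, w != q -> \sum_k Qr m w k * (- z k) = 0.
  by move=> w wq; rewrite (eq_bigr (fun k => - (Qr m w k * z k))) ?sumrN ?Hv ?oppr0 // => k _; rewrite mulrN.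
have h1 := @maxpr _ _ Hloop Hconn q z zq Hv.
have h2 := @maxpr _ _ Hloop Hconn q (fun k => - z k) ltac:(by rewrite /= zq oppr0) Hv'.
move/negP: vn0; apply; apply/eqP/matrixP => i j; rewrite (ord1 i) mxE -zl.
by apply/eqP; rewrite eq_le h1 /= -oppr_le0 h2.
Qed.

Theorem mainTheorem11 (n : nat) (m : 'I_n.+1 -> 'I_n.+1 -> nat)
  (Hsym : symmetric_mult m) (Hloop : loopless m) (Hconn : connected_mg m)
  (D : 'cV[int]_n.+1) (q : 'I_n.+1) :
  lin_equiv m (reduce_div m q D) D /\
  (forall v : 'I_n.+1, v != q ->
     `|reduce_div m q D v ord0| < (deg m v)%:Z).
Proof.
split.
  exists (- floor_cV (Lq m q *m map_mx (fun z : int => z%:~R) D)).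
  by rewrite /reduce_div addrAC subrr add0r mulmxN.
have Au := @red_unit _ _ Hsym Hloop Hconn q.
set A := reduced_laplacian m q in Au.
pose Dr : 'cV[rat]_n.+1 := map_mx (fun z : int => z%:~R) D.
pose x := Lq m q *m Dr.
have xl : forall j, x (lift q j) 0 = (invmx A *m row' q Dr) j 0.
  move=> j; rewrite !mxE (bigD1_ord q) //= !mxE liftK unlift_none mul0r add0r.
  by apply: eq_bigr => k _; rewrite !mxE !liftK.
have Qx : forall i, \sum_k Qr m (lift q i) k * x k 0 = Dr (lift q i) 0.
  move=> i; rewrite (bigD1_ord q) //=.
  have -> : x q 0 = 0 by rewrite !mxE big1 // => k _; rewrite !mxE unlift_none mul0r.
  rewrite mulr0 add0r.
  transitivity ((A *m (invmx A *m row' q Dr)) i 0).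
    by rewrite mxE; apply: eq_bigr => k _; rewrite xl !mxE.
  by rewrite mulmxA mulmxV // mul1mx mxE.
move=> v vq.
have [i ev] : exists i, v = lift q i.
  by case: (unliftP q v) => [j ->|e]; [exists j | rewrite e eqxx in vq].
pose z k := x k 0 - ((Num.floor (x k 0))%:~R : rat).
have zb : forall k, 0 <= z k < 1.
  move=> k; have := floor_itv (x k 0); rewrite intrD /z => /andP [h1 h2].
  by apply/andP; split; lra.
have eqD : ((reduce_div m q D v 0)%:~R : rat) = \sum_k (m v k)%:R * (z v - z k).
  rewrite -row_Q //.
  transitivity (Dr v 0 - \sum_k Qr m v k * (Num.floor (x k 0))%:~R).
    rewrite /reduce_div !mxE intrB rmorph_sum; congr (_ - _).
    by apply: eq_bigr => k _; rewrite !mxE rmorphM.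
  rewrite ev -(Qx i) -sumrB; apply: eq_bigr => k _.
  by rewrite mulrBr.
have [k0 mk0] : exists k0, (0 < m v k0)%N.
  have /connectP [[|y p] pp lq] := Hconn v q; first by move: vq; rewrite lq eqxx.
  by move: pp => /= /andP [a _]; exists y.
have zd : forall k, `|z v - z k| < 1.
  move=> k; have := zb k; have := zb v; move=> /andP [a1 a2] /andP [b1 b2].
  rewrite ltr_norml; apply/andP; split; lra.
rewrite -(ltr_int rat) intr_norm eqD.
apply: (le_lt_trans (ler_norm_sum _ _ _)).
have -> : ((deg m v)%:Z%:~R : rat) = \sum_k (m v k)%:R by rewrite /deg sumMz.
rewrite (bigD1 k0) //= [X in _ < X](bigD1 k0) //=.
apply: ltr_leD.
  rewrite normrM normr_nat -[X in _ < X]mulr1 ltr_pM2l ?zd //.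
  by rewrite ltr0n.
apply: ler_sum => k _; rewrite normrM normr_nat -[X in _ <= X]mulr1.
by rewrite ler_wpM2l // ltW.
Qed.
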